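(* Let $\mathcal{F}$ be a regular family. Define $U_{\mathcal{F}}:\textbf{Tr}(2\times\mathbb{N})\to\textbf{Tr}(2\times\mathbb{N})$ by: $\varnothing\in U_{\mathcal{F}}(T)$, and for $k\geqslant1$, $(\varepsilon_i,n_i)_{i=1}^k\in U_{\mathcal{F}}(T)$ if and only if either $(\varepsilon_i,n_i)_{i=1}^k\in T$ or $\overline{(n_i)_{i=1}^k}\in\mathcal{F}$. Then $U_{\mathcal{F}}$ is continuous, and $U_{\mathcal{F}}(T)\in C$ if and only if $T\in C$.
   Context: A family $\mathcal{F}$ of finite subsets of $\mathbb{N}$ is regular if it is hereditary, spreading (if $(m_i)_{i=1}^k\in\mathcal{F}$ increasing and $n_1<\dots<n_k$, $m_i\leqslant n_i$, then $(n_i)_{i=1}^k\in\mathcal{F}$) and compact in $2^{\mathbb{N}}$; finite sets are identified with their increasing enumerations, so $\mathcal{F}$ is a tree on $\mathbb{N}$. For a set $\Lambda$, $\textbf{Tr}(\Lambda)$ is the set of subsets of $\Lambda^{<\mathbb{N}}$ (finite sequences) closed under initial segments, with the topology inherited from $2^{\Lambda^{<\mathbb{N}}}$ (product topology); $\textbf{Tr}=\textbf{Tr}(\mathbb{N})$; $2=\{0,1\}$. A tree $T$ on $\mathbb{N}$ is ill-founded if there is $(n_i)_{i=1}^\infty$ with $(n_i)_{i=1}^l\in T$ for all $l$, and well-founded otherwise; $\textbf{IF}$ denotes the ill-founded trees. For $T\in\textbf{Tr}(2\times\mathbb{N})$ and $\sigma=(\varepsilon_n)\in2^{\mathbb{N}}$,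 $T(\sigma)=\varnothing$ if $T=\varnothing$, and otherwise $T(\sigma)=\{\varnothing\}\cup\{(n_i)_{i=1}^l:(\varepsilon_i,n_i)_{i=1}^l\in T\}$. $C=\{T\in\textbf{Tr}(2\times\mathbb{N}):T(\sigma)\in\textbf{IF}\text{ for all }\sigma\in2^{\mathbb{N}}\}$. For $v=(n_1,\dots,n_k)$, $\overline{v}=(n_1,n_1+n_2,\dots,n_1+\dots+n_k)$. *)

(* Defs.v *)
From HB Require Import structures.
From mathcomp Require Import all_boot all_order all_algebra.
From mathcomp Require Import all_classical all_reals all_analysis.

Set Implicit Arguments.
Unset Strict Implicit.
Unset Printing Implicit Defensive.

Local Open Scope classical_set_scope.

(* Finite sequences on Lambda are [seq Lambda]; a subset of Lambda^{<N} is a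
   boolean predicate [seq Lambda -> bool], i.e. a point of 2^{Lambda^{<N}}.
   The space 2^{Lambda^{<N}} with the product topology is
   [{ptws seq Lambda -> bool}] (bool carries the discrete topology). *)

Definition Tr (L : Type) : set (seq L -> bool) :=
  [set T | forall s t : seq L, T (s ++ t) -> T s].

(* The set 2 = {0,1} is represented by [bool]. *)
Definition seq2N := seq (bool * nat).

Definition IF : set (seq nat -> bool) :=
  [set T | Tr T /\ exists x : nat -> nat, forall l : nat, T (mkseq x l)].

(* T(sigma) for T in Tr(2 x N) and sigma = (eps_n) in 2^N
   (sigma 0 plays the role of eps_1). *)
Definition tree_at (T : seq2N -> bool) (sigma : nat -> bool) : seq nat -> bool :=
  fun s => `[< exists u, T u >] &&
           ((s == [::]) || T (zip (mkseq sigma (size s)) s)).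

Definition C : set (seq2N -> bool) :=
  [set T | Tr T /\ forall sigma : nat -> bool, IF (tree_at T sigma)].

Fixpoint psums_from (acc : nat) (v : seq nat) : seq nat :=
  match v with
  | [::] => [::]
  | n :: v' => (acc + n) :: psums_from (acc + n) v'
  end.
Definition overline (v : seq nat) : seq nat := psums_from 0 v.

(* Families of finite subsets of N, finite sets identified with their
   (strictly) increasing enumerations. *)
Definition regular (F : set (seq nat)) : Prop :=
  (forall s, F s -> sorted ltn s) /\
  (forall s t, F s -> subseq t s -> F t) /\
  (forall m n, F m -> sorted ltn n -> size n = size m ->
     (forall i, (i < size m)%N -> (nth 0 m i <= nth 0 n i)%N) -> F n) /\
  compact [set f : {ptws nat -> bool} | exists2 s, F s & f = (fun k => k \in s)].

Definition U_F (F : set (seq nat)) (T : seq2N -> bool) : seq2N -> bool :=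
  fun s => (s == [::]) || T s || `[< F (overline (unzip2 s)) >].

(* Main.v *)
Require Import Defs.
From HB Require Import structures.
From mathcomp Require Import all_boot all_order all_algebra.
From mathcomp Require Import all_classical all_reals all_analysis.
From mathcomp Require Import zify.

Local Open Scope classical_set_scope.


Lemma size_psums acc v : size (psums_from acc v) = size v.
Proof. by elim: v acc => //= a v IH acc; rewrite IH. Qed.

Lemma psums_take acc v k : psums_from acc (take k v) = take k (psums_from acc v).
Proof.
elim: v acc k => [|a v IH] acc [|k] //=; by rewrite IH.
Qed.

Lemma take_mkseq_le (A : Type) (f : nat -> A) k l : (k <= l)%N ->
  take k (mkseq f l) = mkseq f k.
Proof.
move=> kl; apply: (@eq_from_nth _ (f 0)).
  by rewrite size_take !size_mkseq; case: ltngtP kl => //= ->.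
move=> i; rewrite size_take size_mkseq => il.
have ik : (i < k)%N by move: il; case: ifP => // /negbT; rewrite -leqNgt => lk il'; lia.
rewrite nth_take // !nth_mkseq //; exact: leq_trans ik kl.
Qed.

Lemma zip_mkseq (A B : Type) (f : nat -> A) (g : nat -> B) l :
  zip (mkseq f l) (mkseq g l) = mkseq (fun i => (f i, g i)) l.
Proof.
apply: (@eq_from_nth _ (f 0, g 0)).
  by rewrite size_zip !size_mkseq minnn.
move=> i; rewrite size_zip !size_mkseq minnn => il.
by rewrite nth_zip ?size_mkseq // !nth_mkseq.
Qed.

Lemma unzip2_mkseq (A B : Type) (f : nat -> A) (g : nat -> B) l :
  unzip2 (mkseq (fun i => (f i, g i)) l) = mkseq g l.
Proof.
apply: (@eq_from_nth _ (g 0)).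
  by rewrite size_map !size_mkseq.
move=> i; rewrite size_map !size_mkseq => il.
by rewrite (nth_map (f 0, g 0)) ?size_mkseq // !nth_mkseq.
Qed.

Lemma Tr_take (L : Type) (T : seq L -> bool) u k : Tr T -> T u -> T (take k u).
Proof. by move=> TT Tu; apply: (TT _ (drop k u)); rewrite cat_take_drop. Qed.

Lemma take_zip (A B : Type) (a : seq A) (b : seq B) k :
  take k (zip a b) = zip (take k a) (take k b).
Proof. by elim: a b k => [|x a IH] [|y b] [|k] //=; rewrite IH. Qed.

Lemma Tr_tree_at T sigma : Tr T -> Tr (tree_at T sigma).
Proof.
move=> TT s t /andP[ne H]; apply/andP; split => //.
case: (boolP (s == [::])) => [/eqP->//|sne]; apply/orP; right.
have {}H : T (zip (mkseq sigma (size (s ++ t))) (s ++ t)).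
  by case/orP: H => [/eqP E|//]; move: E sne; case: s.
have := @Tr_take _ _ _ (size s) TT H.
rewrite take_zip take_mkseq_le; last by rewrite size_cat leq_addr.
by rewrite take_size_cat.
Qed.

Lemma UF_Tr F T : regular F -> Tr T -> Tr (U_F F T).
Proof.
move=> [_ [her _]] TT s t; rewrite /U_F.
case/orP=> [/orP[/eqP E|H]|H].
- by move: E; case: s => //= _; rewrite eqxx.
- by rewrite (TT _ _ H) orbT.
- apply/orP; right; apply/asboolP; move/asboolP: H => H.
  apply: her H _.
  have -> : unzip2 s = take (size s) (unzip2 (s ++ t)).
    by rewrite /unzip2 map_cat -(size_map snd) take_size_cat.
  rewrite /overline psums_take; exact: take_subseq.
Qed.


Lemma UF_cont F :
  continuous (U_F F : {ptws seq2N -> bool} -> {ptws seq2N -> bool}).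
Proof.
move=> T; apply/cvg_sup => s.
apply/cvg_image.
  rewrite eqEsubset; split => // y _; by exists (fun _ => y).
move=> B /= Bn.
have H : \forall g \near (T : {ptws seq2N -> bool}), g s = T s.
  have := @proj_continuous _ (fun _ : seq2N => bool) s T [set T s] (discrete_set1 _).
  exact.
exists ((fun f : {ptws seq2N -> bool} => f s) @^-1` B).
  rewrite /=.
  have BT := nbhs_singleton Bn.
  apply: filterS H => g gs /=; rewrite /U_F gs; exact: BT.
rewrite image_preimage //.
rewrite eqEsubset; split => // y _; by exists (fun _ => y).
Qed.

Lemma noinf F : regular F -> forall x : nat -> nat,
  ~ (forall n, F (overline (mkseq x n))).
Proof.
move=> [srt [her [_ cpt]]] x allF.
pose P n := overline (mkseq x n).
have Ptake k n : (k <= n)%N -> P k = take k (P n).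
  by move=> kn; rewrite /P /overline -psums_take take_mkseq_le.
pose g : {ptws nat -> bool} := fun t => `[< exists n, t \in P n >].
have hs : hausdorff_space {ptws nat -> bool}.
  by apply: (@hausdorff_product nat (fun _ => bool)) => _; exact: discrete_hausdorff.
have clA := compact_closed hs cpt.
have : exists2 s, F s & g = (fun k => k \in s).
  apply: (@closed_cvg _ _ \oo _ (fun n => (fun k => k \in P n) : {ptws nat -> bool}) _ clA).
    by apply: filterE => n; exists (P n) => //; exact: allF.
  apply/pointwise_cvgP => t.
  case: (pselect (exists n, t \in P n)) => [[n0 tn0]|nt].
    have -> : g t = true by apply/asboolP; exists n0.
    apply: cvg_near_cst; apply: filterS (nbhs_infty_ge n0) => n /= n0n.
    by move: tn0; rewrite (Ptake _ _ n0n) => /mem_take.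
  have -> : g t = false by apply/asboolP.
  apply: cvg_near_cst; apply: filterS (nbhs_infty_ge 0) => n _ /=.
  by apply/negbTE/negP => tn; apply: nt; exists n.
move=> [s Fs gs].
have sz : size (P (size s).+1) = (size s).+1 by rewrite /P /overline size_psums size_mkseq.
have : (size (P (size s).+1) <= size s)%N.
  apply: uniq_leq_size.
    exact: (sorted_uniq ltn_trans ltnn (srt _ (allF _))).
  move=> y yP.
  have : g y by apply/asboolP; exists (size s).+1.
  by rewrite gs.
by rewrite sz ltnn.
Qed.


Theorem proposition4p7 (F : set (seq nat)) :
  regular F ->
  (forall T, Tr T -> Tr (U_F F T)) /\
  {within (@Tr (bool * nat) : set {ptws seq2N -> bool}),
     continuous (U_F F : {ptws seq2N -> bool} -> {ptws seq2N -> bool})} /\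
  (forall T, Tr T -> (C (U_F F T) <-> C T)).
Proof.
move=> reg; split; first by move=> T; exact: UF_Tr.
split; first exact: continuous_subspaceT (UF_cont F).
move=> T TT; split.
- case=> _ H; split => // sigma; split; first exact: Tr_tree_at.
  have [_ [x Hx]] := H sigma.
  have [l0 nF] : exists l0, ~ F (overline (mkseq x l0)).
    case: (pselect (exists l0, ~ F (overline (mkseq x l0)))) => // nex.
    exfalso; apply: (noinf _ reg x) => n; apply: contrapT => nF; by apply: nex; exists n.
  have Tl : forall l, (l0 <= l)%N -> T (zip (mkseq sigma l.+1) (mkseq x l.+1)).
    move=> l ll0; have := Hx l.+1; rewrite /tree_at size_mkseq => /andP[_].
    rewrite /U_F zip_mkseq unzip2_mkseq.
    case/orP=> // /orP[// | /asboolP Fl]; exfalso; apply: nF.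
    case: reg => _ [her _]; apply: her Fl _.
    rewrite -(@take_mkseq_le _ x l0 l.+1); last by lia.
    rewrite /overline psums_take; exact: take_subseq.
  have Tall : forall l, T (zip (mkseq sigma l) (mkseq x l)).
    move=> l; have := @Tr_take _ _ _ l TT (Tl (l + l0) (leq_addl _ _)).
    by rewrite !zip_mkseq take_mkseq_le //; lia.
  exists x => l; rewrite /tree_at; apply/andP; split.
    by apply/asboolP; exists (zip (mkseq sigma 0) (mkseq x 0)).
  by apply/orP; right; rewrite size_mkseq.
- case=> _ H; split; first exact: UF_Tr.
  move=> sigma; split; first exact: Tr_tree_at (UF_Tr _ _ reg TT).
  have [_ [x Hx]] := H sigma; exists x => l.
  have := Hx l; rewrite /tree_at => /andP[_ h]; apply/andP; split.
    by apply/asboolP; exists [::]; rewrite /U_F eqxx.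
  case/orP: h => [->//|h]; apply/orP; right; by rewrite /U_F h orbT.
Qed.
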